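(* Let $A$ be the set of $\alpha=(\alpha_0,\dots,\alpha_5)\in\mathbb{R}^6$ with $\alpha_0+\alpha_1=0$ and $\alpha_2+\alpha_3+\alpha_4+\alpha_5=1$. Let $G$ be the group acting on $A$ generated by the shifts \begin{align*} \sigma_1(\alpha)&=(\alpha_0+1,\alpha_1-1,\alpha_2,\alpha_3,\alpha_4,\alpha_5),\\ \sigma_2(\alpha)&=(\alpha_0,\alpha_1,\alpha_2+1,\alpha_3,\alpha_4,\alpha_5-1),\\ \sigma_3(\alpha)&=(\alpha_0,\alpha_1,\alpha_2,\alpha_3+1,\alpha_4,\alpha_5-1),\\ \sigma_4(\alpha)&=(\alpha_0,\alpha_1,\alpha_2,\alpha_3,\alpha_4+1,\alpha_5-1),\\ \sigma_5(\alpha)&=(\alpha_0+\tfrac12,\alpha_1-\tfrac12,\alpha_2+\tfrac12,\alpha_3+\tfrac12,\alpha_4-\tfrac12,\alpha_5-\tfrac12), \end{align*} by the permutations of $(\alpha_2,\alpha_3,\alpha_4,\alpha_5)$, and by the permutation exchanging $\alpha_0$ and $\alpha_1$. Then a fundamental domain for this action is the polytope \[ -\tfrac12\le\alpha_0\le0,\quad\alpha_1=-\alpha_0,\quad\alpha_2\le\alpha_3\le\alpha_4\le\alpha_5,\quad\alpha_4+\alpha_5\le1,\quad\alpha_2+\alpha_3+\alpha_4+\alpha_5=1. \] *)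

(* Defs.v *)
From Stdlib Require Import Reals List.
Open Scope R_scope.

Record V6 := mkV { a0 : R; a1 : R; a2 : R; a3 : R; a4 : R; a5 : R }.

Definition inA (x : V6) : Prop :=
  a0 x + a1 x = 0 /\ a2 x + a3 x + a4 x + a5 x = 1.

Definition inD (x : V6) : Prop :=
  -(1/2) <= a0 x <= 0 /\ a1 x = - a0 x /\
  a2 x <= a3 x /\ a3 x <= a4 x /\ a4 x <= a5 x /\
  a4 x + a5 x <= 1 /\ a2 x + a3 x + a4 x + a5 x = 1.

Definition interiorD (x : V6) : Prop :=
  inD x /\ exists eps, 0 < eps /\
    forall y, inA y ->
      Rabs (a0 y - a0 x) < eps -> Rabs (a1 y - a1 x) < eps ->
      Rabs (a2 y - a2 x) < eps -> Rabs (a3 y - a3 x) < eps ->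
      Rabs (a4 y - a4 x) < eps -> Rabs (a5 y - a5 x) < eps -> inD y.

(* Generators of G: the five shifts, the transpositions of the coordinates
   alpha_2..alpha_5 (which generate all their permutations), and the exchange
   of alpha_0 and alpha_1. *)
Inductive gen := S1 | S2 | S3 | S4 | S5
  | P23 | P24 | P25 | P34 | P35 | P45 | P01.

Definition act_gen (g : gen) (x : V6) : V6 :=
  let '(mkV b0 b1 b2 b3 b4 b5) := x in
  match g with
  | S1 => mkV (b0 + 1) (b1 - 1) b2 b3 b4 b5
  | S2 => mkV b0 b1 (b2 + 1) b3 b4 (b5 - 1)
  | S3 => mkV b0 b1 b2 (b3 + 1) b4 (b5 - 1)
  | S4 => mkV b0 b1 b2 b3 (b4 + 1) (b5 - 1)
  | S5 => mkV (b0 + 1/2) (b1 - 1/2) (b2 + 1/2) (b3 + 1/2) (b4 - 1/2) (b5 - 1/2)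
  | P23 => mkV b0 b1 b3 b2 b4 b5
  | P24 => mkV b0 b1 b4 b3 b2 b5
  | P25 => mkV b0 b1 b5 b3 b4 b2
  | P34 => mkV b0 b1 b2 b4 b3 b5
  | P35 => mkV b0 b1 b2 b5 b4 b3
  | P45 => mkV b0 b1 b2 b3 b5 b4
  | P01 => mkV b1 b0 b2 b3 b4 b5
  end.

Definition act_gen_inv (g : gen) (x : V6) : V6 :=
  let '(mkV b0 b1 b2 b3 b4 b5) := x in
  match g with
  | S1 => mkV (b0 - 1) (b1 + 1) b2 b3 b4 b5
  | S2 => mkV b0 b1 (b2 - 1) b3 b4 (b5 + 1)
  | S3 => mkV b0 b1 b2 (b3 - 1) b4 (b5 + 1)
  | S4 => mkV b0 b1 b2 b3 (b4 - 1) (b5 + 1)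
  | S5 => mkV (b0 - 1/2) (b1 + 1/2) (b2 - 1/2) (b3 - 1/2) (b4 + 1/2) (b5 + 1/2)
  | _ => act_gen g x
  end.

(* Elements of G are words in the generators and their inverses
   (true = generator, false = its inverse). *)
Fixpoint act_word (w : list (gen * bool)) (x : V6) : V6 :=
  match w with
  | nil => x
  | (g, true) :: w' => act_gen g (act_word w' x)
  | (g, false) :: w' => act_gen_inv g (act_word w' x)
  end.

(* Main.v *)
Require Import Defs.
From Stdlib Require Import Reals List Lra Lia.
Open Scope R_scope.

Definition reach x y := exists w, act_word w x = y.

Lemma act_word_app w1 w2 x : act_word (w1 ++ w2) x = act_word w1 (act_word w2 x).
Proof. induction w1 as [|[g b] w1 IH]; simpl; [reflexivity|]. destruct b; rewrite IH; reflexivity. Qed.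

Lemma reach_refl x : reach x x. Proof. exists nil; reflexivity. Qed.
Lemma reach_trans x y z : reach x y -> reach y z -> reach x z.
Proof. intros [w1 H1] [w2 H2]; exists (w2 ++ w1); rewrite act_word_app, H1; exact H2. Qed.
Lemma reach_gen g x : reach x (act_gen g x). Proof. exists ((g,true)::nil); reflexivity. Qed.

Lemma iter_shift (g : gen) (F : R -> V6 -> V6) (x : V6) :
  (forall r, act_gen g (F r x) = F (r+1) x) ->
  (forall r, act_gen_inv g (F r x) = F (r-1) x) ->
  F 0 x = x -> forall z, reach x (F (IZR z) x).
Proof.
  intros H1 H2 H0.
  assert (Hp: forall n, act_word (repeat (g,true) n) x = F (INR n) x).
  { induction n as [|n IH]; [simpl; now rewrite H0|].
    cbn [repeat act_word]. rewrite IH, H1, S_INR. reflexivity. }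
  assert (Hn: forall n, act_word (repeat (g,false) n) x = F (- INR n) x).
  { induction n as [|n IH]; [simpl; rewrite Ropp_0; now rewrite H0|].
    cbn [repeat act_word]. rewrite IH, H2, S_INR. f_equal. ring. }
  intros [|p|p].
  - exists nil. simpl. now rewrite H0.
  - exists (repeat (g,true) (Pos.to_nat p)). rewrite Hp. f_equal.
    rewrite INR_IZR_INZ, Znat.positive_nat_Z. reflexivity.
  - exists (repeat (g,false) (Pos.to_nat p)). rewrite Hn. f_equal.
    rewrite INR_IZR_INZ, Znat.positive_nat_Z. reflexivity.
Qed.

Definition sh1 r x := mkV (a0 x + r) (a1 x - r) (a2 x) (a3 x) (a4 x) (a5 x).
Definition sh2 r x := mkV (a0 x) (a1 x) (a2 x + r) (a3 x) (a4 x) (a5 x - r).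
Definition sh3 r x := mkV (a0 x) (a1 x) (a2 x) (a3 x + r) (a4 x) (a5 x - r).
Definition sh4 r x := mkV (a0 x) (a1 x) (a2 x) (a3 x) (a4 x + r) (a5 x - r).

Ltac shtac := intros; match goal with v : V6 |- _ => destruct v end; simpl; f_equal; ring.
Lemma reach_sh1 z x : reach x (sh1 (IZR z) x).
Proof. apply iter_shift with S1; unfold sh1; shtac. Qed.
Lemma reach_sh2 z x : reach x (sh2 (IZR z) x).
Proof. apply iter_shift with S2; unfold sh2; shtac. Qed.
Lemma reach_sh3 z x : reach x (sh3 (IZR z) x).
Proof. apply iter_shift with S3; unfold sh3; shtac. Qed.
Lemma reach_sh4 z x : reach x (sh4 (IZR z) x).
Proof. apply iter_shift with S4; unfold sh4; shtac. Qed.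

Lemma frac r : exists z, 0 <= r + IZR z < 1.
Proof. exists (1 - up r)%Z. rewrite minus_IZR. destruct (archimed r). lra. Qed.

Lemma cmp (g : gen) (pi pj : V6 -> R) x :
  (forall y, pj y < pi y -> pi (act_gen g y) <= pj (act_gen g y)) ->
  exists y, reach x y /\ (y = x \/ y = act_gen g x) /\ pi y <= pj y.
Proof.
  intros H. destruct (Rle_lt_dec (pi x) (pj x)).
  - exists x. split; [apply reach_refl|]. auto.
  - exists (act_gen g x). split; [apply reach_gen|]. auto.
Qed.

Ltac cmpH := intros [b0 b1 b2 b3 b4 b5]; simpl; lra.

Lemma sort3 x : exists y, reach x y /\ a0 y = a0 x /\ a1 y = a1 x /\ a5 y = a5 x /\
  a2 y <= a3 y /\ a3 y <= a4 y /\ a2 y + a3 y + a4 y = a2 x + a3 x + a4 x /\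
  (0 <= a2 x < 1 -> 0 <= a3 x < 1 -> 0 <= a4 x < 1 ->
     0 <= a2 y < 1 /\ 0 <= a3 y < 1 /\ 0 <= a4 y < 1).
Proof.
  destruct (cmp P23 a2 a3 x) as [y1 [R1 [E1 H1]]]; [cmpH|].
  destruct (cmp P34 a3 a4 y1) as [y2 [R2 [E2 H2]]]; [cmpH|].
  destruct (cmp P23 a2 a3 y2) as [y3 [R3 [E3 H3]]]; [cmpH|].
  exists y3. split; [eapply reach_trans; [eassumption|]; eapply reach_trans; eassumption|].
  destruct x as [b0 b1 b2 b3 b4 b5].
  destruct E1; subst y1; destruct E2; subst y2; destruct E3; subst y3; simpl in *;
    repeat split; intros; lra.
Qed.

Definition Spr y :=
  a2 y - a3 y <= 1 /\ a2 y - a4 y <= 1 /\ a2 y - a5 y <= 1 /\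
  a3 y - a2 y <= 1 /\ a3 y - a4 y <= 1 /\ a3 y - a5 y <= 1 /\
  a4 y - a2 y <= 1 /\ a4 y - a3 y <= 1 /\ a4 y - a5 y <= 1 /\
  a5 y - a2 y <= 1 /\ a5 y - a3 y <= 1 /\ a5 y - a4 y <= 1.

Lemma sort4 x : exists y, reach x y /\ a0 y = a0 x /\ a1 y = a1 x /\
  a2 y <= a3 y /\ a3 y <= a4 y /\ a4 y <= a5 y /\
  a2 y + a3 y + a4 y + a5 y = a2 x + a3 x + a4 x + a5 x /\
  (Spr x -> Spr y).
Proof.
  destruct (cmp P23 a2 a3 x) as [y1 [R1 [E1 H1]]]; [cmpH|].
  destruct (cmp P45 a4 a5 y1) as [y2 [R2 [E2 H2]]]; [cmpH|].
  destruct (cmp P24 a2 a4 y2) as [y3 [R3 [E3 H3]]]; [cmpH|].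
  destruct (cmp P35 a3 a5 y3) as [y4 [R4 [E4 H4]]]; [cmpH|].
  destruct (cmp P34 a3 a4 y4) as [y5 [R5 [E5 H5]]]; [cmpH|].
  exists y5. split.
  { eapply reach_trans; [eassumption|]. eapply reach_trans; [eassumption|].
    eapply reach_trans; [eassumption|]. eapply reach_trans; eassumption. }
  destruct x as [b0 b1 b2 b3 b4 b5]. unfold Spr.
  destruct E1; subst y1; destruct E2; subst y2; destruct E3; subst y3;
  destruct E4; subst y4; destruct E5; subst y5; simpl in *;
    repeat split; intros; lra.
Qed.

Lemma L_frac x : inA x -> exists y, reach x y /\ inA y /\ Spr y.
Proof.
  intros [HA1 HA2].
  destruct (frac (a2 x)) as [z2 H2].
  destruct (frac (a3 x)) as [z3 H3].
  destruct (frac (a4 x)) as [z4 H4].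
  set (x1 := sh4 (IZR z4) (sh3 (IZR z3) (sh2 (IZR z2) x))).
  assert (R1 : reach x x1).
  { eapply reach_trans; [apply reach_sh2|]. eapply reach_trans; [apply reach_sh3|].
    apply reach_sh4. }
  destruct (sort3 x1) as [y [Ry [E0 [E1 [E5 [S1 [S2 [Es Hb]]]]]]]].
  assert (Hx1 : 0 <= a2 x1 < 1 /\ 0 <= a3 x1 < 1 /\ 0 <= a4 x1 < 1) by (unfold x1, sh2, sh3, sh4; simpl; lra).
  destruct Hx1 as [B2 [B3 B4]]. specialize (Hb B2 B3 B4). destruct Hb as [C2 [C3 C4]].
  assert (Sum: a2 y + a3 y + a4 y + a5 y = 1) by (unfold x1, sh2, sh3, sh4 in *; simpl in *; lra).
  assert (T01: a0 y + a1 y = 0) by (unfold x1, sh2, sh3, sh4 in *; simpl in *; lra).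
  assert (Rxy : reach x y) by (eapply reach_trans; eassumption).
  destruct (Rle_lt_dec (a2 y + a3 y + a4 y) 1) as [Hs|Hs].
  { exists y. split; [assumption|]. split; [split; assumption|]. unfold Spr; repeat split; lra. }
  destruct (Rle_lt_dec (a2 y + a3 y + a4 y) 2) as [Hs2|Hs2].
  - destruct (Rle_lt_dec (a4 y) (a5 y + 1)).
    + exists y. split; [assumption|]. split; [split; assumption|]. unfold Spr; repeat split; lra.
    + exists (sh4 (IZR (-1)) y). split; [eapply reach_trans; [eassumption|apply reach_sh4]|].
      unfold inA, Spr, sh4; simpl; repeat split; lra.
  - destruct (Rle_lt_dec (a5 y + 2) (a3 y)).
    + exists (sh4 (IZR (-1)) (sh3 (IZR (-1)) y)).
      split; [eapply reach_trans; [eassumption|]; eapply reach_trans; [apply reach_sh3|apply reach_sh4]|].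
      unfold inA, Spr, sh4, sh3; simpl; repeat split; lra.
    + exists (sh4 (IZR (-1)) y). split; [eapply reach_trans; [eassumption|apply reach_sh4]|].
      unfold inA, Spr, sh4; simpl; repeat split; lra.
Qed.

Definition sorted y := a2 y <= a3 y /\ a3 y <= a4 y /\ a4 y <= a5 y.

Lemma L_half x : inA x -> sorted x -> a5 x - a2 x <= 1 ->
  exists y, reach x y /\ inA y /\ sorted y /\ a4 y + a5 y <= 1.
Proof.
  intros [HA1 HA2] [S1 [S2 S3]] Hsp.
  destruct (Rle_lt_dec (a4 x + a5 x) 1).
  - exists x. split; [apply reach_refl|]. unfold inA, sorted; repeat split; lra.
  - exists (act_gen P35 (act_gen P24 (act_gen S5 x))).
    split; [exists ((P35,true)::(P24,true)::(S5,true)::nil); reflexivity|].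
    destruct x as [b0 b1 b2 b3 b4 b5]; unfold inA, sorted; simpl in *; repeat split; lra.
Qed.

Lemma L_t x : inA x -> exists y, reach x y /\ a2 y = a2 x /\ a3 y = a3 x /\
  a4 y = a4 x /\ a5 y = a5 x /\ -(1/2) <= a0 y <= 0 /\ a1 y = - a0 y.
Proof.
  intros [HA1 HA2]. destruct (frac (a0 x + 1/2)) as [z Hz].
  assert (R1 := reach_sh1 z x).
  destruct (Rle_lt_dec (a0 (sh1 (IZR z) x)) 0).
  - exists (sh1 (IZR z) x). split; [assumption|]. unfold sh1 in *; simpl in *; repeat split; lra.
  - exists (act_gen P01 (sh1 (IZR z) x)). split; [eapply reach_trans; [eassumption|apply reach_gen]|].
    destruct x as [b0 b1 b2 b3 b4 b5]. unfold sh1 in *; simpl in *; repeat split; lra.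
Qed.

Lemma part1 x : inA x -> exists w, inD (act_word w x).
Proof.
  intros HA.
  destruct (L_frac x HA) as [y1 [R1 [[A1 A2] Sp1]]].
  destruct (sort4 y1) as [y2 [R2 [E0 [E1 [S1 [S2 [S3 [Es Hs]]]]]]]].
  specialize (Hs Sp1). 
  destruct (L_half y2) as [y3 [R3 [[B1 B2] [[T1 [T2 T3]] T4]]]].
  { split; lra. } { split; [lra|split; lra]. } { unfold Spr in Hs; lra. }
  destruct (L_t y3) as [y4 [R4 [F2 [F3 [F4 [F5 [F0 F1]]]]]]]. { split; lra. }
  assert (R : reach x y4).
  { eapply reach_trans; [eassumption|]. eapply reach_trans; [eassumption|].
    eapply reach_trans; eassumption. }
  destruct R as [w Hw]. exists w. rewrite Hw. unfold inD. repeat split; lra.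
Qed.

Definition isZ r := exists z, r = IZR z.
Definition isH r := exists z, r = IZR z + 1/2.

Lemma isZ_p1 r : isZ r -> isZ (r+1). Proof. unfold isZ, isH; intros [z ->]. exists (z+1)%Z. rewrite plus_IZR; simpl; lra. Qed.
Lemma isZ_m1 r : isZ r -> isZ (r-1). Proof. unfold isZ, isH; intros [z ->]. exists (z-1)%Z. rewrite minus_IZR; simpl; lra. Qed.
Lemma isH_p1 r : isH r -> isH (r+1). Proof. unfold isZ, isH; intros [z ->]. exists (z+1)%Z. rewrite plus_IZR; rewrite ?plus_IZR, ?minus_IZR, ?opp_IZR; simpl; lra. Qed.
Lemma isH_m1 r : isH r -> isH (r-1). Proof. unfold isZ, isH; intros [z ->]. exists (z-1)%Z. rewrite minus_IZR; rewrite ?plus_IZR, ?minus_IZR, ?opp_IZR; simpl; lra. Qed.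
Lemma isZ_ph r : isZ r -> isH (r+1/2). Proof. unfold isZ, isH; intros [z ->]. exists z; rewrite ?plus_IZR, ?minus_IZR, ?opp_IZR; simpl; lra. Qed.
Lemma isZ_mh r : isZ r -> isH (r-1/2). Proof. unfold isZ, isH; intros [z ->]. exists (z-1)%Z. rewrite minus_IZR; rewrite ?plus_IZR, ?minus_IZR, ?opp_IZR; simpl; lra. Qed.
Lemma isH_ph r : isH r -> isZ (r+1/2). Proof. unfold isZ, isH; intros [z ->]. exists (z+1)%Z. rewrite plus_IZR; rewrite ?plus_IZR, ?minus_IZR, ?opp_IZR; simpl; lra. Qed.
Lemma isH_mh r : isH r -> isZ (r-1/2). Proof. unfold isZ, isH; intros [z ->]. exists z; rewrite ?plus_IZR, ?minus_IZR, ?opp_IZR; simpl; lra. Qed.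
Lemma isZ_opp r : isZ r -> isZ (-r). Proof. unfold isZ, isH; intros [z ->]. exists (-z)%Z. rewrite opp_IZR. reflexivity. Qed.
Lemma isH_opp r : isH r -> isH (-r). Proof. unfold isZ, isH; intros [z ->]. exists (-z-1)%Z. rewrite minus_IZR, opp_IZR; rewrite ?plus_IZR, ?minus_IZR, ?opp_IZR; simpl; lra. Qed.

Definition memx p x := p = a2 x \/ p = a3 x \/ p = a4 x \/ p = a5 x.

Definition Inv x y := exists (s:bool) c p0 p1 p2 p3 v0 v1 v2 v3,
 a0 y = (if s then a1 x else a0 x) + c /\
 a1 y = (if s then a0 x else a1 x) - c /\
 a2 y = p0 + v0 /\ a3 y = p1 + v1 /\ a4 y = p2 + v2 /\ a5 y = p3 + v3 /\
 (memx p0 x /\ memx p1 x /\ memx p2 x /\ memx p3 x /\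
 (a2 x = p0 \/ a2 x = p1 \/ a2 x = p2 \/ a2 x = p3) /\
 (a3 x = p0 \/ a3 x = p1 \/ a3 x = p2 \/ a3 x = p3) /\
 (a4 x = p0 \/ a4 x = p1 \/ a4 x = p2 \/ a4 x = p3) /\
 (a5 x = p0 \/ a5 x = p1 \/ a5 x = p2 \/ a5 x = p3)) /\
 v0+v1+v2+v3 = 0 /\
 ((isZ c /\ isZ v0 /\ isZ v1 /\ isZ v2 /\ isZ v3) \/ (isH c /\ isH v0 /\ isH v1 /\ isH v2 /\ isH v3)).

Ltac solve_p := repeat split; auto using isZ_p1, isZ_m1, isH_p1, isH_m1, isZ_ph, isZ_mh,
  isH_ph, isH_mh, isZ_opp, isH_opp.

Ltac par Hpar := destruct Hpar as [[?[?[?[??]]]]|[?[?[?[??]]]]];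
  first [solve [left; solve_p] | solve [right; solve_p]].

Ltac fin Hpar := cbn [a0 a1 a2 a3 a4 a5 negb]; repeat match goal with |- _ /\ _ => split end;
  match goal with
  | |- (isZ _ /\ _) \/ _ => par Hpar
  | |- memx _ _ => assumption
  | H : ?l = _ \/ _ |- ?l = _ \/ _ => revert H; clear; tauto
  | |- _ => lra
  end.

Lemma Inv_gen x y g : Inv x y -> Inv x (act_gen g y).
Proof.
  destruct y as [b0 b1 b2 b3 b4 b5].
  intros [s [c [p0 [p1 [p2 [p3 [v0 [v1 [v2 [v3 [E0 [E1 [E2 [E3 [E4 [E5 [[M0 [M1 [M2 [M3 [N2 [N3 [N4 N5]]]]]]] [Hs Hpar]]]]]]]]]]]]]]]]]].
  simpl in *. destruct g; simpl.
  - exists s, (c+1), p0, p1, p2, p3, v0, v1, v2, v3; fin Hpar.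
  - exists s, c, p0, p1, p2, p3, (v0+1), v1, v2, (v3-1); fin Hpar.
  - exists s, c, p0, p1, p2, p3, v0, (v1+1), v2, (v3-1); fin Hpar.
  - exists s, c, p0, p1, p2, p3, v0, v1, (v2+1), (v3-1); fin Hpar.
  - exists s, (c+1/2), p0, p1, p2, p3, (v0+1/2), (v1+1/2), (v2-1/2), (v3-1/2); fin Hpar.
  - exists s, c, p1, p0, p2, p3, v1, v0, v2, v3; fin Hpar.
  - exists s, c, p2, p1, p0, p3, v2, v1, v0, v3; fin Hpar.
  - exists s, c, p3, p1, p2, p0, v3, v1, v2, v0; fin Hpar.
  - exists s, c, p0, p2, p1, p3, v0, v2, v1, v3; fin Hpar.
  - exists s, c, p0, p3, p2, p1, v0, v3, v2, v1; fin Hpar.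
  - exists s, c, p0, p1, p3, p2, v0, v1, v3, v2; fin Hpar.
  - exists (negb s), (-c), p0, p1, p2, p3, v0, v1, v2, v3;
    destruct s; simpl in *; fin Hpar.
Qed.

Lemma Inv_geninv x y g : Inv x y -> Inv x (act_gen_inv g y).
Proof.
  intros H. destruct g; try (destruct y; apply (Inv_gen x _ _ H)).
  all: destruct y as [b0 b1 b2 b3 b4 b5];
  destruct H as [s [c [p0 [p1 [p2 [p3 [v0 [v1 [v2 [v3 [E0 [E1 [E2 [E3 [E4 [E5 [[M0 [M1 [M2 [M3 [N2 [N3 [N4 N5]]]]]]] [Hs Hpar]]]]]]]]]]]]]]]]]];
  simpl in *.
  - exists s, (c-1), p0, p1, p2, p3, v0, v1, v2, v3; fin Hpar.
  - exists s, c, p0, p1, p2, p3, (v0-1), v1, v2, (v3+1); fin Hpar.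
  - exists s, c, p0, p1, p2, p3, v0, (v1-1), v2, (v3+1); fin Hpar.
  - exists s, c, p0, p1, p2, p3, v0, v1, (v2-1), (v3+1); fin Hpar.
  - exists s, (c-1/2), p0, p1, p2, p3, (v0-1/2), (v1-1/2), (v2+1/2), (v3+1/2); fin Hpar.
Qed.

Lemma Inv_word x w : Inv x (act_word w x).
Proof.
  induction w as [|[g b] w IH]; simpl.
  - exists false, 0, (a2 x), (a3 x), (a4 x), (a5 x), 0, 0, 0, 0.
    repeat split; try lra; try (unfold memx; tauto).
    left; repeat split; exists 0%Z; reflexivity.
  - destruct b; [apply Inv_gen | apply Inv_geninv]; exact IH.
Qed.

Lemma int_strict x : interiorD x ->
  -(1/2) < a0 x < 0 /\ a2 x < a3 x /\ a3 x < a4 x /\ a4 x < a5 x /\ a4 x + a5 x < 1.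
Proof.
  intros [HD [eps [Heps H]]].
  assert (Hr: forall r, -eps < r < eps -> Rabs r < eps) by (intros; apply Rabs_def1; lra).
  unfold inD in HD. decompose [and] HD.
  set (e := eps/2).
  assert (He : 0 < e < eps) by (unfold e; lra).
  Ltac pert H Hr y := let D := fresh "D" in
    assert (D := H y ltac:(unfold inA; simpl; lra)
      ltac:(apply Hr; simpl; lra) ltac:(apply Hr; simpl; lra) ltac:(apply Hr; simpl; lra)
      ltac:(apply Hr; simpl; lra) ltac:(apply Hr; simpl; lra) ltac:(apply Hr; simpl; lra));
    unfold inD in D; simpl in D; decompose [and] D; clear D.
  pert H Hr (mkV (a0 x + e) (a1 x - e) (a2 x) (a3 x) (a4 x) (a5 x)).
  pert H Hr (mkV (a0 x - e) (a1 x + e) (a2 x) (a3 x) (a4 x) (a5 x)).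
  pert H Hr (mkV (a0 x) (a1 x) (a2 x + e) (a3 x - e) (a4 x) (a5 x)).
  pert H Hr (mkV (a0 x) (a1 x) (a2 x) (a3 x + e) (a4 x - e) (a5 x)).
  pert H Hr (mkV (a0 x) (a1 x) (a2 x) (a3 x) (a4 x + e) (a5 x - e)).
  pert H Hr (mkV (a0 x) (a1 x) (a2 x - e) (a3 x) (a4 x + e) (a5 x)).
  repeat split; lra.
Qed.

Ltac cl := repeat match goal with H : _ \/ _ |- _ => clear H end.

Lemma Zdiff a b : IZR a - IZR b < 2 -> (a - b < 2)%Z.
Proof. intros H. apply lt_IZR. rewrite minus_IZR. exact H. Qed.

Lemma alcove (x0 x1 x2 x3 y0 y1 y2 y3 p0 p1 p2 p3 v0 v1 v2 v3 : R) :
 x0 < x1 -> x1 < x2 -> x2 < x3 -> x3 - x0 < 1 ->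
 y0 < y1 -> y1 < y2 -> y2 < y3 -> y3 - y0 < 1 ->
 y0 = p0 + v0 -> y1 = p1 + v1 -> y2 = p2 + v2 -> y3 = p3 + v3 ->
 isZ v0 -> isZ v1 -> isZ v2 -> isZ v3 -> v0 + v1 + v2 + v3 = 0 ->
 (p0 = x0 \/ p0 = x1 \/ p0 = x2 \/ p0 = x3) ->
 (p1 = x0 \/ p1 = x1 \/ p1 = x2 \/ p1 = x3) ->
 (p2 = x0 \/ p2 = x1 \/ p2 = x2 \/ p2 = x3) ->
 (p3 = x0 \/ p3 = x1 \/ p3 = x2 \/ p3 = x3) ->
 (x0 = p0 \/ x0 = p1 \/ x0 = p2 \/ x0 = p3) ->
 (x1 = p0 \/ x1 = p1 \/ x1 = p2 \/ x1 = p3) ->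
 (x2 = p0 \/ x2 = p1 \/ x2 = p2 \/ x2 = p3) ->
 (x3 = p0 \/ x3 = p1 \/ x3 = p2 \/ x3 = p3) ->
 y0 = x0 /\ y1 = x1 /\ y2 = x2 /\ y3 = x3.
Proof.
  intros X01 X12 X23 Xs Y01 Y12 Y23 Ys E0 E1 E2 E3 [z0 Z0] [z1 Z1] [z2 Z2] [z3 Z3] Sv
    P0 P1 P2 P3 Q0 Q1 Q2 Q3.
  assert (B0 : x0 <= p0 <= x3) by (destruct P0 as [K|[K|[K|K]]]; cl; lra).
  assert (B1 : x0 <= p1 <= x3) by (destruct P1 as [K|[K|[K|K]]]; cl; lra).
  assert (B2 : x0 <= p2 <= x3) by (destruct P2 as [K|[K|[K|K]]]; cl; lra).
  assert (B3 : x0 <= p3 <= x3) by (destruct P3 as [K|[K|[K|K]]]; cl; lra).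
  revert P0 P1 P2 P3 Q0 Q1 Q2 Q3.
  assert (S : (z0 + z1 + z2 + z3 = 0)%Z) by (apply eq_IZR; rewrite !plus_IZR; simpl; lra).
  assert (D01 := Zdiff z0 z1 ltac:(lra)). assert (D02 := Zdiff z0 z2 ltac:(lra)).
  assert (D03 := Zdiff z0 z3 ltac:(lra)). assert (D10 := Zdiff z1 z0 ltac:(lra)).
  assert (D12 := Zdiff z1 z2 ltac:(lra)). assert (D13 := Zdiff z1 z3 ltac:(lra)).
  assert (D20 := Zdiff z2 z0 ltac:(lra)). assert (D21 := Zdiff z2 z1 ltac:(lra)).
  assert (D23 := Zdiff z2 z3 ltac:(lra)). assert (D30 := Zdiff z3 z0 ltac:(lra)).
  assert (D31 := Zdiff z3 z1 ltac:(lra)). assert (D32 := Zdiff z3 z2 ltac:(lra)).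
  assert (z0 = 0 /\ z1 = 0 /\ z2 = 0 /\ z3 = 0)%Z as [W0 [W1 [W2 W3]]] by lia.
  intros P0 P1 P2 P3 Q0 Q1 Q2 Q3.
  subst z0 z1 z2 z3. simpl in Z0, Z1, Z2, Z3. subst v0 v1 v2 v3.
  rewrite Rplus_0_r in E0, E1, E2, E3. subst y0 y1 y2 y3.
  assert (p0 <= x0) by (destruct Q0 as [K|[K|[K|K]]]; cl; lra).
  assert (x1 <= p1) by (destruct P1 as [K|[K|[K|K]]]; cl; lra).
  assert (p1 <= x1) by (destruct Q1 as [K|[K|[K|K]]]; cl; lra).
  assert (x2 <= p2) by (destruct P2 as [K|[K|[K|K]]]; cl; lra).
  assert (p2 <= x2) by (destruct Q2 as [K|[K|[K|K]]]; cl; lra).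
  assert (x3 <= p3) by (destruct P3 as [K|[K|[K|K]]]; cl; lra).
  repeat split; lra.
Qed.

Lemma V6_eq y x : a0 y = a0 x -> a1 y = a1 x -> a2 y = a2 x -> a3 y = a3 x ->
  a4 y = a4 x -> a5 y = a5 x -> y = x.
Proof. destruct y, x; simpl; intros; subst; reflexivity. Qed.

Lemma part2 (w : list (gen * bool)) (x : V6) :
  inA x -> interiorD x -> interiorD (act_word w x) -> act_word w x = x.
Proof.
  intros [A1 A2] Hx Hy.
  assert (Sx := int_strict x Hx). assert (Sy := int_strict _ Hy).
  destruct Hy as [Dy _]. unfold inD in Dy.
  destruct (Inv_word x w) as [s [c [p0 [p1 [p2 [p3 [v0 [v1 [v2 [v3 [E0 [E1 [E2 [E3 [E4 [E5
    [[M0 [M1 [M2 [M3 [N2 [N3 [N4 N5]]]]]]] [Hs Hpar]]]]]]]]]]]]]]]]]].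
  set (y := act_word w x) in *. unfold memx in *.
  destruct s.
  - destruct Hpar as [[[z Hc] _] | [[z Hc] [H0 [H1 [H2 H3]]]]].
    + exfalso. assert (-1 < z < 0)%Z; [split; apply lt_IZR; simpl; cl; lra | lia].
    + exfalso.
      assert (K := alcove (a2 x) (a3 x) (a4 x) (a5 x)
        (a4 y - 1/2) (a5 y - 1/2) (a2 y + 1/2) (a3 y + 1/2) p2 p3 p0 p1
        (v2 - 1/2) (v3 - 1/2) (v0 + 1/2) (v1 + 1/2)
        ltac:(cl; lra) ltac:(cl; lra) ltac:(cl; lra) ltac:(cl; lra) ltac:(cl; lra) ltac:(cl; lra) ltac:(cl; lra) ltac:(cl; lra)
        ltac:(cl; lra) ltac:(cl; lra) ltac:(cl; lra) ltac:(cl; lra)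
        (isH_mh _ H2) (isH_mh _ H3) (isH_ph _ H0) (isH_ph _ H1) ltac:(cl; lra)
        M2 M3 M0 M1
        ltac:(revert N2; clear; tauto) ltac:(revert N3; clear; tauto)
        ltac:(revert N4; clear; tauto) ltac:(revert N5; clear; tauto)).
      cl; lra.
  - destruct Hpar as [[[z Hc] [H0 [H1 [H2 H3]]]] | [[z Hc] _]].
    + assert (z = 0)%Z by (assert (-1 < z < 1)%Z; [split; apply lt_IZR; simpl; cl; lra | lia]).
      subst z. simpl in Hc.
      assert (K := alcove (a2 x) (a3 x) (a4 x) (a5 x) (a2 y) (a3 y) (a4 y) (a5 y)
        p0 p1 p2 p3 v0 v1 v2 v3
        ltac:(cl; lra) ltac:(cl; lra) ltac:(cl; lra) ltac:(cl; lra) ltac:(cl; lra) ltac:(cl; lra) ltac:(cl; lra) ltac:(cl; lra)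
        E2 E3 E4 E5 H0 H1 H2 H3 Hs M0 M1 M2 M3 N2 N3 N4 N5).
      apply V6_eq; cl; lra.
    + exfalso. assert (-1 < z < 0)%Z; [split; apply lt_IZR; simpl; cl; lra | lia].
Qed.

Theorem lemma2p3 :
  (forall x : V6, inA x -> exists w : list (gen * bool), inD (act_word w x)) /\
  (forall (w : list (gen * bool)) (x : V6),
      inA x -> interiorD x -> interiorD (act_word w x) -> act_word w x = x).
Proof.
  split; [exact part1 | exact part2].
Qed.
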